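(* Let $X$ and $Y$ be $\mathfrak{Q}$-preordered $\mathfrak{Q}$-subsets. Then the following collections are pairwise in bijection: (a) $\mathfrak{Q}$-distributors from $X$ to $Y$; (b) $\mathfrak{Q}$-order-preserving maps $Y\to\mathsf{P}X$; (c) $\mathfrak{Q}$-order-preserving maps $X\to\mathsf{P}^{\dagger}Y$; (d) $\mathfrak{Q}$-polarities from $X$ to $Y$; (e) $\mathfrak{Q}$-axialities from $Y$ to $X$; (f) dual $\mathfrak{Q}$-axialities from $Y$ to $X$.
   Context: $(\mathfrak{Q},\&,e)$ is a non-trivial unital quantale (complete lattice with associative multiplication with unit $e$ preserving joins in each variable, $\bot<e$), implications $p\& q\le r\iff p\le r/ q\iff q\le p\backslash r$, $\mathcal{D}\mathfrak{Q}(p,q)=\{u\mid (u/ p)\& p=u=q\&(q\backslash u)\}$. A $\mathfrak{Q}$-subset is a set $X$ with $|\cdot|\colon X\to\mathfrak{Q}$; $\mathbf{1}_q$ is $\{*\}$ with $|*|=q$. A $\mathfrak{Q}$-relation from $X$ to $Y$ is a map $\phi\colon X\times Y\to\mathfrak{Q}$ with $\phi(x,y)\in\mathcal{D}\mathfrak{Q}(|x|,|y|)$, ordered pointwise; composition $(\psi\circ\phi)(x,z)=\bigvee_y(\psi(y,z)/|y|)\&\phi(x,y)$; $\xi\swarrow\phi$ is the largest $\psi'$ with $\psi'\circ\phi\le\xi$ and $\psi\searrow\xi$ the largest $\phi'$ with $\psi\circ\phi'\le\xi$. A $\mathfrak{Q}$-preordered $\mathfrak{Q}$-subset is a $\mathfrak{Q}$-subset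 $X$ with a $\mathfrak{Q}$-relation $1_X^{\natural}$ on $X$ with $\mathrm{id}_X\le 1_X^{\natural}$ ($\mathrm{id}_X(x,x)=|x|$, else $\bot$) and $1_X^{\natural}\circ 1_X^{\natural}\le 1_X^{\natural}$. A $\mathfrak{Q}$-order-preserving map $h\colon A\to B$ satisfies $|ha|=|a|$ and $1_A^{\natural}(a,a')\le 1_B^{\natural}(ha,ha')$; $h\le k$ means $|a|\le 1_B^{\natural}(ha,ka)$ for all $a$; a $\mathfrak{Q}$-Galois connection $h\dashv k$ means $1_A\le kh$ and $hk\le 1_B$. A $\mathfrak{Q}$-distributor from $X$ to $Y$ is a $\mathfrak{Q}$-relation $\phi$ with $1_Y^{\natural}\circ\phi\circ 1_X^{\natural}\le\phi$. $\mathsf{P}X$ consists of $\mathfrak{Q}$-relations $\mu$ from $X$ to some $\mathbf{1}_q$ with $\mu\circ 1_X^{\natural}\le\mu$, $|\mu|=q$, $\mathfrak{Q}$-preorder $1_{\mathsf{P}X}^{\natural}(\mu,\mu')=\mu'\swarrow\mu$; $\mathsf{P}^{\dagger}X$ consists of $\mathfrak{Q}$-relations $\lambda$ from some $\mathbf{1}_q$ to $X$ with $1_X^{\natural}\circ\lambda\le\lambda$, $|\lambda|=q$, $1_{\mathsf{P}^{\dagger}X}^{\natural}(\lambda,\lambda')=\lambda'\searrow\lambda$. A $\mathfrak{Q}$-polarity from $X$ to $Y$ is a $\mathfrak{Q}$-Galois connection $f\dashv g$ with $f\colon\mathsf{P}X\to\mathsf{P}^{\dagger}Y$, $g\colon\mathsf{P}^{\dagger}Y\to\mathsf{P}X$;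 a $\mathfrak{Q}$-axiality from $Y$ to $X$ is a $\mathfrak{Q}$-Galois connection $f\dashv g$ with $f\colon\mathsf{P}Y\to\mathsf{P}X$, $g\colon\mathsf{P}X\to\mathsf{P}Y$; a dual $\mathfrak{Q}$-axiality from $Y$ to $X$ is a $\mathfrak{Q}$-Galois connection $f\dashv g$ with $f\colon\mathsf{P}^{\dagger}Y\to\mathsf{P}^{\dagger}X$, $g\colon\mathsf{P}^{\dagger}X\to\mathsf{P}^{\dagger}Y$. *)

(* Defs.v *)
Set Implicit Arguments.
Unset Strict Implicit.

Record Quantale := {
  qcar :> Type;
  qle : qcar -> qcar -> Prop;
  qle_refl : forall a, qle a a;
  qle_trans : forall a b c, qle a b -> qle b c -> qle a c;
  qle_antisym : forall a b, qle a b -> qle b a -> a = b;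
  qsup : (qcar -> Prop) -> qcar;
  qsup_ub : forall (S : qcar -> Prop) a, S a -> qle a (qsup S);
  qsup_least : forall (S : qcar -> Prop) b,
      (forall a, S a -> qle a b) -> qle (qsup S) b;
  qmul : qcar -> qcar -> qcar;
  qe : qcar;
  qmulA : forall a b c, qmul a (qmul b c) = qmul (qmul a b) c;
  qmul1l : forall a, qmul qe a = a;
  qmulr1 : forall a, qmul a qe = a;
  qmul_supl : forall (S : qcar -> Prop) b,
      qmul (qsup S) b = qsup (fun c => exists a, S a /\ c = qmul a b);
  qmul_supr : forall a (S : qcar -> Prop),
      qmul a (qsup S) = qsup (fun c => exists b, S b /\ c = qmul a b)
}.

Section QDefs.
Variable Q : Quantale.

Definition qbot : Q := @qsup Q (fun _ => False).
Definition qlt (a b : Q) : Prop := qle a b /\ a <> b.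

Definition qrdiv (r q : Q) : Q := qsup (fun p => qle (qmul p q) r).
Definition qldiv (p r : Q) : Q := qsup (fun q => qle (qmul p q) r).

Definition DQ (p q u : Q) : Prop :=
  qmul (qrdiv u p) p = u /\ u = qmul q (qldiv q u).

Record QSubset := { qs_car :> Type; qs_ext : qs_car -> Q }.

Definition one (q : Q) : QSubset := {| qs_car := unit; qs_ext := fun _ => q |}.

Definition is_Qrel (X Y : QSubset) (phi : X -> Y -> Q) : Prop :=
  forall x y, DQ (qs_ext x) (qs_ext y) (phi x y).

Definition rle (X Y : QSubset) (phi psi : X -> Y -> Q) : Prop :=
  forall x y, qle (phi x y) (psi x y).

Definition comp (X Y Z : QSubset) (psi : Y -> Z -> Q) (phi : X -> Y -> Q)
  : X -> Z -> Q :=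
  fun x z => qsup (fun c => exists y : Y,
     c = qmul (qrdiv (psi y z) (qs_ext y)) (phi x y)).

(* identity relation: id(x,x) = |x|, bot otherwise *)
Definition idrel (X : QSubset) : X -> X -> Q :=
  fun x x' => qsup (fun c => x = x' /\ c = qs_ext x).

Definition swarrow (X Y Z : QSubset) (xi : X -> Z -> Q) (phi : X -> Y -> Q)
  : Y -> Z -> Q :=
  fun y z => qsup (fun c => exists psi' : Y -> Z -> Q,
     is_Qrel psi' /\ rle (comp psi' phi) xi /\ c = psi' y z).

Definition searrow (X Y Z : QSubset) (psi : Y -> Z -> Q) (xi : X -> Z -> Q)
  : X -> Y -> Q :=
  fun x y => qsup (fun c => exists phi' : X -> Y -> Q,
     is_Qrel phi' /\ rle (comp psi phi') xi /\ c = phi' x y).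

Definition is_Qpreorder (X : QSubset) (r : X -> X -> Q) : Prop :=
  is_Qrel r /\ rle (@idrel X) r /\ rle (comp r r) r.

Record QPreord := { qp_set :> QSubset; qp_rel : qp_set -> qp_set -> Q;
                    qp_ok : is_Qpreorder qp_rel }.

Definition Qmono (A B : QSubset) (rA : A -> A -> Q) (rB : B -> B -> Q)
  (h : A -> B) : Prop :=
  (forall a, qs_ext (h a) = qs_ext a) /\
  (forall a a', qle (rA a a') (rB (h a) (h a'))).

Definition Qmap_le (A B : QSubset) (rB : B -> B -> Q) (h k : A -> B) : Prop :=
  forall a, qle (qs_ext a) (rB (h a) (k a)).

Definition Qgalois (A B : QSubset) (rA : A -> A -> Q) (rB : B -> B -> Q)
  (h : A -> B) (k : B -> A) : Prop :=
  Qmono rA rB h /\ Qmono rB rA k /\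
  Qmap_le rA (fun a => a) (fun a => k (h a)) /\
  Qmap_le rB (fun b => h (k b)) (fun b => b).

Definition is_distributor (X Y : QPreord) (phi : X -> Y -> Q) : Prop :=
  is_Qrel phi /\ rle (comp (@qp_rel Y) (comp phi (@qp_rel X))) phi.

(* an element: q together with a Q-relation mu from X to 1_q,
   mu o 1_X <= mu ;  |mu| = q *)
Definition PX_car (X : QPreord) : Type :=
  { q : Q & { mu : X -> one q -> Q |
      is_Qrel mu /\ rle (comp mu (@qp_rel X)) mu } }.

Definition PX (X : QPreord) : QSubset :=
  {| qs_car := PX_car X; qs_ext := fun m => projT1 m |}.

Definition PX_mu (X : QPreord) (m : PX X) : X -> one (projT1 m) -> Q :=
  proj1_sig (projT2 m).

Definition PX_rel (X : QPreord) : PX X -> PX X -> Q :=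
  fun m m' => swarrow (@PX_mu X m') (@PX_mu X m) tt tt.

Definition PdX_car (X : QPreord) : Type :=
  { q : Q & { lam : one q -> X -> Q |
      is_Qrel lam /\ rle (comp (@qp_rel X) lam) lam } }.

Definition PdX (X : QPreord) : QSubset :=
  {| qs_car := PdX_car X; qs_ext := fun l => projT1 l |}.

Definition PdX_lam (X : QPreord) (l : PdX X) : one (projT1 l) -> X -> Q :=
  proj1_sig (projT2 l).

Definition PdX_rel (X : QPreord) : PdX X -> PdX X -> Q :=
  fun l l' => searrow (@PdX_lam X l') (@PdX_lam X l) tt tt.

Definition Distributors (X Y : QPreord) : Type :=
  { phi : X -> Y -> Q | is_distributor phi }.

Definition MonoToP (X Y : QPreord) : Type :=
  { h : Y -> PX X | Qmono (@qp_rel Y) (@PX_rel X) h }.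

Definition MonoToPd (X Y : QPreord) : Type :=
  { h : X -> PdX Y | Qmono (@qp_rel X) (@PdX_rel Y) h }.

Definition Polarities (X Y : QPreord) : Type :=
  { fg : (PX X -> PdX Y) * (PdX Y -> PX X) |
      Qgalois (@PX_rel X) (@PdX_rel Y) (fst fg) (snd fg) }.

Definition Axialities (Y X : QPreord) : Type :=
  { fg : (PX Y -> PX X) * (PX X -> PX Y) |
      Qgalois (@PX_rel Y) (@PX_rel X) (fst fg) (snd fg) }.

Definition DualAxialities (Y X : QPreord) : Type :=
  { fg : (PdX Y -> PdX X) * (PdX X -> PdX Y) |
      Qgalois (@PdX_rel Y) (@PdX_rel X) (fst fg) (snd fg) }.

End QDefs.

Definition InBij (A B : Type) : Prop :=
  exists (f : A -> B) (g : B -> A),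
    (forall a, g (f a) = a) /\ (forall b, f (g b) = b).

(* Main.v *)
Require Import Defs.
From Stdlib Require Import Setoid FunctionalExtensionality ProofIrrelevance.

Section Basics.
Context {Q : Quantale}.
Implicit Types a b c p q r u : Q.

Local Notation "a <= b" := (@qle Q a b).
Local Notation "a * b" := (@qmul Q a b).

Lemma le_refl a : a <= a. Proof. apply qle_refl. Qed.
Lemma le_trans a b c : a <= b -> b <= c -> a <= c. Proof. apply qle_trans. Qed.
Lemma le_anti a b : a <= b -> b <= a -> a = b. Proof. apply qle_antisym. Qed.
Lemma sup_ub (S : Q -> Prop) a : S a -> a <= qsup S. Proof. apply qsup_ub. Qed.
Lemma sup_least (S : Q -> Prop) b : (forall a, S a -> a <= b) -> qsup S <= b.
Proof. apply qsup_least. Qed.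

Lemma sup2 a b : a <= b -> qsup (fun x => x = a \/ x = b) = b.
Proof.
  intro H. apply le_anti.
  - apply sup_least. intros x [->| ->]; [exact H| apply le_refl].
  - apply sup_ub. now right.
Qed.

Lemma mul_monol a b c : a <= b -> a * c <= b * c.
Proof.
  intro H. rewrite <- (sup2 _ _ H), qmul_supl. apply sup_ub. exists a. split; auto.
Qed.
Lemma mul_monor a b c : a <= b -> c * a <= c * b.
Proof.
  intro H. rewrite <- (sup2 _ _ H), qmul_supr. apply sup_ub. exists a. split; auto.
Qed.
Lemma mul_mono a b c d : a <= b -> c <= d -> a * c <= b * d.
Proof. intros; eapply le_trans; [apply mul_monol; eauto| apply mul_monor; auto]. Qed.

Lemma rdiv_counit r q : qrdiv r q * q <= r.
Proof.
  unfold qrdiv. rewrite qmul_supl. apply sup_least. intros c [a [Ha ->]]. exact Ha.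
Qed.
Lemma ldiv_counit q r : q * qldiv q r <= r.
Proof.
  unfold qldiv. rewrite qmul_supr. apply sup_least. intros c [a [Ha ->]]. exact Ha.
Qed.
Lemma rdiv_I p q r : p * q <= r -> p <= qrdiv r q.
Proof. intro H. unfold qrdiv. apply sup_ub. exact H. Qed.
Lemma ldiv_I p q r : p * q <= r -> q <= qldiv p r.
Proof. intro H. unfold qldiv. apply sup_ub. exact H. Qed.
Lemma rdiv_E p q r : p <= qrdiv r q -> p * q <= r.
Proof. intro H. eapply le_trans; [apply mul_monol; eauto| apply rdiv_counit]. Qed.
Lemma ldiv_E p q r : q <= qldiv p r -> p * q <= r.
Proof. intro H. eapply le_trans; [apply mul_monor; eauto| apply ldiv_counit]. Qed.

Lemma e_rdiv q : qe Q <= qrdiv q q.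
Proof. apply rdiv_I. rewrite qmul1l. apply le_refl. Qed.
Lemma e_ldiv q : qe Q <= qldiv q q.
Proof. apply ldiv_I. rewrite qmulr1. apply le_refl. Qed.

Lemma rdiv_mono a b q : a <= b -> qrdiv a q <= qrdiv b q.
Proof. intro H. apply rdiv_I. eapply le_trans; [apply rdiv_counit| exact H]. Qed.
Lemma ldiv_mono a b q : a <= b -> qldiv q a <= qldiv q b.
Proof. intro H. apply ldiv_I. eapply le_trans; [apply ldiv_counit| exact H]. Qed.

Lemma mul_rdiv a b q : a * qrdiv b q <= qrdiv (a * b) q.
Proof. apply rdiv_I. rewrite <- qmulA. apply mul_monor. apply rdiv_counit. Qed.
Lemma ldiv_mul a b q : qldiv q a * b <= qldiv q (a * b).
Proof. apply ldiv_I. rewrite qmulA. apply mul_monol. apply ldiv_counit. Qed.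

Lemma e_mul_l a b : qe Q <= a -> b <= a * b.
Proof. intro H. rewrite <- (qmul1l b) at 1. apply mul_monol. exact H. Qed.
Lemma e_mul_r a b : qe Q <= a -> b <= b * a.
Proof. intro H. rewrite <- (qmulr1 b) at 1. apply mul_monor. exact H. Qed.

Definition Rd p u := qrdiv u p * p = u.
Definition Ld q u := q * qldiv q u = u.

Lemma DQ_Rd p q u : DQ p q u -> Rd p u. Proof. intros [H _]. exact H. Qed.
Lemma DQ_Ld p q u : DQ p q u -> Ld q u. Proof. intros [_ H]. symmetry. exact H. Qed.
Lemma DQ_I p q u : Rd p u -> Ld q u -> DQ p q u.
Proof. intros H1 H2. split; auto. Qed.

Lemma Rd_sup p (S : Q -> Prop) : (forall s, S s -> Rd p s) -> Rd p (qsup S).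
Proof.
  unfold Rd in *. intro H. apply le_anti; [apply rdiv_counit|].
  apply sup_least. intros s Hs. rewrite <- (H s Hs). apply mul_monol.
  apply rdiv_mono. apply sup_ub. exact Hs.
Qed.
Lemma Ld_sup q (S : Q -> Prop) : (forall s, S s -> Ld q s) -> Ld q (qsup S).
Proof.
  unfold Ld in *. intro H. apply le_anti; [apply ldiv_counit|].
  apply sup_least. intros s Hs. rewrite <- (H s Hs). apply mul_monor.
  apply ldiv_mono. apply sup_ub. exact Hs.
Qed.
Lemma Rd_mull p a u : Rd p u -> Rd p (a * u).
Proof.
  unfold Rd. intro H. apply le_anti; [apply rdiv_counit|].
  rewrite <- H at 1. rewrite qmulA. apply mul_monol. apply mul_rdiv.
Qed.
Lemma Ld_mulr q u b : Ld q u -> Ld q (u * b).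
Proof.
  unfold Ld. intro H. apply le_anti; [apply ldiv_counit|].
  rewrite <- H at 1. rewrite <- qmulA. apply mul_monor. apply ldiv_mul.
Qed.

Lemma alt q e d : Rd q e -> Ld q d -> qrdiv e q * d = e * qldiv q d.
Proof.
  unfold Rd, Ld. intros He Hd. rewrite <- Hd at 1. rewrite qmulA. rewrite He. reflexivity.
Qed.

Lemma Rd_self q : Rd q q.
Proof. unfold Rd. apply le_anti; [apply rdiv_counit| apply e_mul_l, e_rdiv]. Qed.
Lemma Ld_self q : Ld q q.
Proof. unfold Ld. apply le_anti; [apply ldiv_counit| apply e_mul_r, e_ldiv]. Qed.
Lemma DQ_self q : DQ q q q.
Proof. apply DQ_I; [apply Rd_self| apply Ld_self]. Qed.

Lemma unitL q d : Ld q d -> qrdiv q q * d = d.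
Proof. intro H. rewrite alt; [exact H| apply Rd_self| exact H]. Qed.

End Basics.

Section Rels.
Context {Q : Quantale}.
Local Notation "a <= b" := (@qle Q a b).
Local Notation "a * b" := (@qmul Q a b).
Local Notation ext := qs_ext.

Lemma L_supr a (S : Q -> Prop) c : (forall s, S s -> a * s <= c) -> a * qsup S <= c.
Proof. intro H. rewrite qmul_supr. apply sup_least. intros d [s [Hs ->]]. auto. Qed.
Lemma L_supl (S : Q -> Prop) b c : (forall s, S s -> s * b <= c) -> qsup S * b <= c.
Proof. intro H. rewrite qmul_supl. apply sup_least. intros d [s [Hs ->]]. auto. Qed.

Lemma Qrel_Rd {X Y : QSubset Q} (phi : X -> Y -> Q) x y : is_Qrel phi -> Rd (ext x) (phi x y).
Proof. intro H. eapply DQ_Rd; apply H. Qed.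
Lemma Qrel_Ld {X Y : QSubset Q} (phi : X -> Y -> Q) x y : is_Qrel phi -> Ld (ext y) (phi x y).
Proof. intro H. eapply DQ_Ld; apply H. Qed.

Section R.
Context {X Y Z W : QSubset Q}.

Lemma comp_ge (psi : Y -> Z -> Q) (phi : X -> Y -> Q) x y z :
  qrdiv (psi y z) (ext y) * phi x y <= comp psi phi x z.
Proof. apply sup_ub. exists y. reflexivity. Qed.

Lemma comp_le (psi : Y -> Z -> Q) (phi : X -> Y -> Q) x z c :
  (forall y, qrdiv (psi y z) (ext y) * phi x y <= c) -> comp psi phi x z <= c.
Proof. intro H. apply sup_least. intros d [y ->]. auto. Qed.

Lemma comp_monol (psi psi' : Y -> Z -> Q) (phi : X -> Y -> Q) :
  rle psi psi' -> rle (comp psi phi) (comp psi' phi).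
Proof.
  intros H x z. apply comp_le. intro y. eapply le_trans; [|apply comp_ge].
  apply mul_monol. apply rdiv_mono. apply H.
Qed.

Lemma comp_monor (psi : Y -> Z -> Q) (phi phi' : X -> Y -> Q) :
  rle phi phi' -> rle (comp psi phi) (comp psi phi').
Proof.
  intros H x z. apply comp_le. intro y. eapply le_trans; [|apply comp_ge].
  apply mul_monor. apply H.
Qed.

Lemma comp_Rd (psi : Y -> Z -> Q) (phi : X -> Y -> Q) x z :
  is_Qrel phi -> Rd (ext x) (comp psi phi x z).
Proof.
  intro H. apply Rd_sup. intros s [y ->]. apply Rd_mull. apply Qrel_Rd; auto.
Qed.

Lemma comp_Qrel (psi : Y -> Z -> Q) (phi : X -> Y -> Q) :
  is_Qrel psi -> is_Qrel phi -> is_Qrel (comp psi phi).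
Proof.
  intros Hp Hf x z. apply DQ_I.
  - apply comp_Rd; auto.
  - apply Ld_sup. intros s [y ->]. rewrite alt.
    + apply Ld_mulr. apply Qrel_Ld; auto.
    + apply Qrel_Rd; auto.
    + apply Qrel_Ld; auto.
Qed.

Lemma sw_Qrel (xi : X -> Z -> Q) (phi : X -> Y -> Q) : is_Qrel (swarrow xi phi).
Proof.
  intros y z. apply DQ_I.
  - apply Rd_sup. intros s [p [Hp [_ ->]]]. apply Qrel_Rd; auto.
  - apply Ld_sup. intros s [p [Hp [_ ->]]]. apply Qrel_Ld; auto.
Qed.

Lemma se_Qrel (psi : Y -> Z -> Q) (xi : X -> Z -> Q) : is_Qrel (searrow psi xi).
Proof.
  intros x y. apply DQ_I.
  - apply Rd_sup. intros s [p [Hp [_ ->]]]. apply Qrel_Rd; auto.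
  - apply Ld_sup. intros s [p [Hp [_ ->]]]. apply Qrel_Ld; auto.
Qed.

Lemma sw_ub (xi : X -> Z -> Q) (phi : X -> Y -> Q) (psi : Y -> Z -> Q) :
  is_Qrel psi -> rle (comp psi phi) xi -> rle psi (swarrow xi phi).
Proof. intros H1 H2 y z. apply sup_ub. exists psi. auto. Qed.

Lemma se_ub (psi : Y -> Z -> Q) (xi : X -> Z -> Q) (phi : X -> Y -> Q) :
  is_Qrel phi -> rle (comp psi phi) xi -> rle phi (searrow psi xi).
Proof. intros H1 H2 x y. apply sup_ub. exists phi. auto. Qed.

Lemma sw_prop (xi : X -> Z -> Q) (phi : X -> Y -> Q) :
  is_Qrel phi -> rle (comp (swarrow xi phi) phi) xi.
Proof.
  intros Hf x z. apply comp_le. intro y.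
  rewrite alt; [| apply Qrel_Rd, sw_Qrel | apply Qrel_Ld; auto].
  apply L_supl. intros s [p [Hp [Hc ->]]].
  rewrite <- alt; [| apply Qrel_Rd; auto | apply Qrel_Ld; auto].
  eapply le_trans; [apply comp_ge| apply Hc].
Qed.

Lemma se_prop (psi : Y -> Z -> Q) (xi : X -> Z -> Q) :
  rle (comp psi (searrow psi xi)) xi.
Proof.
  intros x z. apply comp_le. intro y.
  apply L_supr. intros s [p [Hp [Hc ->]]].
  eapply le_trans; [apply comp_ge| apply Hc].
Qed.
End R.

Lemma comp_assoc (X Y Z W : QSubset Q) (psi : Y -> Z -> Q) (phi : X -> Y -> Q)
  (chi : W -> X -> Q) :
  is_Qrel phi -> is_Qrel chi ->
  forall w z, comp psi (comp phi chi) w z = comp (comp psi phi) chi w z.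
Proof.
  intros Hf Hc w z. apply le_anti.
  - apply comp_le. intro y. apply L_supr. intros s [x ->].
    rewrite qmulA. eapply le_trans; [| apply comp_ge with (y := x)].
    apply mul_monol. eapply le_trans; [apply mul_rdiv|]. apply rdiv_mono.
    apply comp_ge.
  - apply comp_le. intro x.
    rewrite alt; [| apply comp_Rd; auto | apply Qrel_Ld; auto].
    apply L_supl. intros s [y ->].
    rewrite <- qmulA. rewrite <- alt; [| apply Qrel_Rd; auto | apply Qrel_Ld; auto].
    eapply le_trans; [| apply comp_ge with (y := y)].
    apply mul_monor. apply comp_ge.
Qed.

Lemma comp_assoc_le (X Y Z W : QSubset Q) (psi : Y -> Z -> Q) (phi : X -> Y -> Q)
  (chi : W -> X -> Q) :
  is_Qrel phi -> is_Qrel chi ->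
  rle (comp psi (comp phi chi)) (comp (comp psi phi) chi).
Proof. intros H1 H2 w z. rewrite comp_assoc; auto. apply le_refl. Qed.
Lemma comp_assoc_ge (X Y Z W : QSubset Q) (psi : Y -> Z -> Q) (phi : X -> Y -> Q)
  (chi : W -> X -> Q) :
  is_Qrel phi -> is_Qrel chi ->
  rle (comp (comp psi phi) chi) (comp psi (comp phi chi)).
Proof. intros H1 H2 w z. rewrite comp_assoc; auto. apply le_refl. Qed.

Lemma rle_trans (X Y : QSubset Q) (a b c : X -> Y -> Q) :
  rle a b -> rle b c -> rle a c.
Proof. intros H1 H2 x y. eapply le_trans; eauto. Qed.
Lemma rle_refl (X Y : QSubset Q) (a : X -> Y -> Q) : rle a a.
Proof. intros x y. apply le_refl. Qed.

Lemma pre_refl (X : QSubset Q) (r : X -> X -> Q) : is_Qpreorder r -> forall x, (ext x) <= r x x.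
Proof.
  intros [_ [H _]] x. eapply le_trans; [| apply H]. apply sup_ub. auto.
Qed.
Lemma pre_Qrel (X : QSubset Q) (r : X -> X -> Q) : is_Qpreorder r -> is_Qrel r.
Proof. intros [H _]; exact H. Qed.
Lemma pre_trans (X : QSubset Q) (r : X -> X -> Q) : is_Qpreorder r -> rle (comp r r) r.
Proof. intros [_ [_ H]]; exact H. Qed.

Lemma pre_l (W X : QSubset Q) (r : X -> X -> Q) (phi : W -> X -> Q) :
  is_Qpreorder r -> rle phi (comp r phi).
Proof.
  intros H w x. eapply le_trans; [| apply comp_ge with (y := x)].
  apply e_mul_l. eapply le_trans; [apply e_rdiv|]. apply rdiv_mono. apply pre_refl; auto.
Qed.
Lemma pre_r (W X : QSubset Q) (r : X -> X -> Q) (phi : X -> W -> Q) :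
  is_Qpreorder r -> is_Qrel phi -> rle phi (comp phi r).
Proof.
  intros H Hf x w. eapply le_trans; [| apply comp_ge with (y := x)].
  pose proof (Qrel_Rd _ x w Hf) as HR; unfold Rd in HR; rewrite <- HR at 1. apply mul_monor. apply pre_refl; auto.
Qed.

Lemma cst_Qrel (q : Q) : is_Qrel (fun (_ : one q) (_ : one q) => q).
Proof. intros [] []. apply DQ_self. Qed.

Lemma comp_cst_l (q : Q) (W : QSubset Q) (mu : W -> one q -> Q) :
  is_Qrel mu -> rle (comp (fun (_ : one q) (_ : one q) => q) mu) mu.
Proof.
  intros H w t. apply comp_le. intros t'. destruct t, t'.
  rewrite unitL; [apply le_refl|]. exact (Qrel_Ld (Y:=one q) _ w tt H).
Qed.
Lemma comp_cst_r (q : Q) (W : QSubset Q) (lam : one q -> W -> Q) :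
  is_Qrel lam -> rle (comp lam (fun (_ : one q) (_ : one q) => q)) lam.
Proof.
  intros H t w. apply comp_le. intros t'. destruct t, t'.
  pose proof (Qrel_Rd (X:=one q) _ tt w H) as HR; unfold Rd in HR; simpl in HR. simpl. rewrite HR. apply le_refl.
Qed.

End Rels.

Notation pmu m := (@PX_mu _ _ m).
Notation plam l := (@PdX_lam _ _ l).

Section PXs.
Context {Q : Quantale}.
Local Notation "a <= b" := (@qle Q a b).
Local Notation "a * b" := (@qmul Q a b).
Local Notation ext := qs_ext.

Definition APre (A : QSubset Q) (r : A -> A -> Q) : Prop :=
  (forall a a', DQ (ext a) (ext a') (r a a')) /\ (forall a, ext a <= r a a) /\
  (forall a a' a'', qrdiv (r a' a'') (ext a') * r a a' <= r a a'').

Definition Sep (A : QSubset Q) (r : A -> A -> Q) : Prop :=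
  forall a a', ext a = ext a' -> ext a <= r a a' -> ext a' <= r a' a -> a = a'.

Section OneX.
Variable X : QPreord Q.
Local Notation rX := (@qp_rel Q X).
Lemma rX_pre : is_Qpreorder rX. Proof. exact (@qp_ok Q X). Qed.
Lemma rX_Qrel : is_Qrel rX. Proof. exact (pre_Qrel _ _ rX_pre). Qed.

Lemma PX_Qrel (m : PX X) : is_Qrel (pmu m).
Proof. exact (proj1 (proj2_sig (projT2 m))). Qed.
Lemma PX_cl (m : PX X) : rle (comp (pmu m) rX) (pmu m).
Proof. exact (proj2 (proj2_sig (projT2 m))). Qed.
Lemma PdX_Qrel (l : PdX X) : is_Qrel (plam l).
Proof. exact (proj1 (proj2_sig (projT2 l))). Qed.
Lemma PdX_cl (l : PdX X) : rle (comp rX (plam l)) (plam l).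
Proof. exact (proj2 (proj2_sig (projT2 l))). Qed.

Lemma PX_eq (m m' : PX X) : projT1 m = projT1 m' ->
  (forall x, pmu m x tt = pmu m' x tt) -> m = m'.
Proof.
  destruct m as [q [mu H]], m' as [q' [mu' H']]. unfold PX_mu. simpl.
  intros E. subst q'. intros Hv.
  assert (mu = mu') as <-.
  { apply functional_extensionality; intro x. apply functional_extensionality; intros [].
    apply Hv. }
  f_equal. f_equal. apply proof_irrelevance.
Qed.

Lemma PdX_eq (l l' : PdX X) : projT1 l = projT1 l' ->
  (forall x, plam l tt x = plam l' tt x) -> l = l'.
Proof.
  destruct l as [q [mu H]], l' as [q' [mu' H']]. unfold PdX_lam. simpl.
  intros E. subst q'. intros Hv.
  assert (mu = mu') as <-.
  { apply functional_extensionality; intros []. apply functional_extensionality; intro x.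
    apply Hv. }
  f_equal. f_equal. apply proof_irrelevance.
Qed.

Lemma PX_APre : APre (PX X) (@PX_rel Q X).
Proof.
  split; [|split].
  - intros m m'. exact (sw_Qrel (pmu m') (pmu m) tt tt).
  - intro m. apply (sw_ub _ _ (fun _ _ => projT1 m) (cst_Qrel _)).
    apply comp_cst_l. apply PX_Qrel.
  - intros m m' m''. unfold PX_rel.
    eapply le_trans; [apply (comp_ge (X:=one (projT1 m)) (Y:=one (projT1 m')) (Z:=one (projT1 m'')) _ _ tt tt tt)|].
    apply sw_ub.
    + apply comp_Qrel; apply sw_Qrel.
    + eapply rle_trans; [apply comp_assoc_ge; [apply sw_Qrel| apply PX_Qrel]|].
      eapply rle_trans; [apply comp_monor, sw_prop, PX_Qrel|].
      apply sw_prop, PX_Qrel.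
Qed.

Lemma PX_Sep : Sep (PX X) (@PX_rel Q X).
Proof.
  assert (K : forall m m' : PX X, projT1 m = projT1 m' -> projT1 m <= PX_rel m m' ->
            forall x, pmu m x tt <= pmu m' x tt).
  { intros m m' E H x.
    eapply le_trans; [| apply (sw_prop (Z:=one (projT1 m')) _ _ (PX_Qrel m) x tt)].
    eapply le_trans; [| apply (comp_ge (Y:=one (projT1 m)) (Z:=one (projT1 m')) _ _ x tt tt)].
    apply e_mul_l. eapply le_trans; [apply (e_rdiv (projT1 m))|].
    apply rdiv_mono. exact H. }
  intros m m' E H1 H2. apply PX_eq; auto.
  intro x. apply le_anti; apply K; auto.
Qed.

Lemma PdX_APre : APre (PdX X) (@PdX_rel Q X).
Proof.
  split; [|split].
  - intros l l'. exact (se_Qrel (plam l') (plam l) tt tt).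
  - intro l. apply (se_ub _ _ (fun _ _ => projT1 l) (cst_Qrel _)).
    apply comp_cst_r. apply PdX_Qrel.
  - intros l l' l''. unfold PdX_rel.
    eapply le_trans; [apply (comp_ge (X:=one (projT1 l)) (Y:=one (projT1 l')) (Z:=one (projT1 l'')) _ _ tt tt tt)|].
    apply se_ub.
    + apply comp_Qrel; apply se_Qrel.
    + eapply rle_trans; [apply comp_assoc_le; apply se_Qrel|].
      eapply rle_trans; [apply comp_monol, se_prop|].
      apply se_prop.
Qed.

Lemma PdX_Sep : Sep (PdX X) (@PdX_rel Q X).
Proof.
  assert (K : forall l l' : PdX X, projT1 l = projT1 l' -> projT1 l <= PdX_rel l l' ->
            forall x, plam l' tt x <= plam l tt x).
  { intros l l' E H x.
    eapply le_trans; [| apply (se_prop (plam l') (plam l) tt x)].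
    eapply le_trans; [| apply (comp_ge (X:=one (projT1 l)) (Y:=one (projT1 l')) _ _ tt tt x)].
    pose proof (Qrel_Rd (X:=one (projT1 l')) _ tt x (PdX_Qrel l')) as HR. unfold Rd in HR. simpl in HR.
    simpl. rewrite <- HR at 1. apply mul_monor. eapply le_trans; [|exact H]. rewrite E. apply le_refl. }
  intros l l' E H1 H2. apply PdX_eq; auto.
  intro x. apply le_anti; apply K; auto.
Qed.

Definition yo (x : X) : PX X.
Proof.
  refine (existT _ (ext x) (exist _ (fun x' (_ : one (ext x)) => rX x' x) _)).
  split.
  - intros x' t. exact (rX_Qrel x' x).
  - intros x'' t. exact (pre_trans _ _ rX_pre x'' x).
Defined.

Definition coyo (x : X) : PdX X.
Proof.
  refine (existT _ (ext x) (exist _ (fun (_ : one (ext x)) x' => rX x x') _)).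
  split.
  - intros t x'. exact (rX_Qrel x x').
  - intros t x''. exact (pre_trans _ _ rX_pre x x'').
Defined.

Lemma yoneda (x : X) (m : PX X) : PX_rel (yo x) m = pmu m x tt.
Proof.
  unfold PX_rel. apply le_anti.
  - eapply le_trans; [| apply (sw_prop (Z:=one (projT1 m)) _ _ (PX_Qrel (yo x)) x tt)].
    eapply le_trans; [| apply (comp_ge (Y:=one (ext x)) (Z:=one (projT1 m)) _ _ x tt tt)].
    pose proof (Qrel_Rd (X:=one (ext x)) (Y:=one (projT1 m)) _ tt tt (sw_Qrel (pmu m) (pmu (yo x)))) as HR.
    unfold Rd in HR. simpl in HR. simpl. rewrite <- HR at 1.
    apply mul_monor. exact (pre_refl _ _ rX_pre x).
  - apply (sw_ub _ _ (fun (_ : one (ext x)) (_ : one (projT1 m)) => pmu m x tt)).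
    + intros [] []. exact (PX_Qrel m x tt).
    + intros x' t. apply comp_le. intros []. destruct t.
      eapply le_trans; [| apply (PX_cl m x' tt)].
      apply (comp_ge (pmu m) rX x' x tt).
Qed.

Lemma coyoneda (x : X) (l : PdX X) : PdX_rel l (coyo x) = plam l tt x.
Proof.
  unfold PdX_rel. apply le_anti.
  - eapply le_trans; [| apply (se_prop (plam (coyo x)) (plam l) tt x)].
    eapply le_trans; [| apply (comp_ge (X:=one (projT1 l)) (Y:=one (ext x)) _ _ tt tt x)].
    apply e_mul_l. eapply le_trans; [apply (e_rdiv (ext x))|].
    apply rdiv_mono. exact (pre_refl _ _ rX_pre x).
  - apply (se_ub _ _ (fun (_ : one (projT1 l)) (_ : one (ext x)) => plam l tt x)).
    + intros [] []. exact (PdX_Qrel l tt x).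
    + intros t x'. apply comp_le. intros []. destruct t.
      eapply le_trans; [| apply (PdX_cl l tt x')].
      apply (comp_ge rX (plam l) tt x x').
Qed.

Lemma PX_Det (m m' : PX X) : projT1 m = projT1 m' ->
  (forall x, PX_rel (yo x) m = PX_rel (yo x) m') -> m = m'.
Proof.
  intros E H. apply PX_eq; auto. intro x. rewrite <- !yoneda. apply H.
Qed.

Lemma PdX_Det (l l' : PdX X) : projT1 l = projT1 l' ->
  (forall x, PdX_rel l (coyo x) = PdX_rel l' (coyo x)) -> l = l'.
Proof.
  intros E H. apply PdX_eq; auto. intro x. rewrite <- !coyoneda. apply H.
Qed.

End OneX.
End PXs.

Section Gal.
Context {Q : Quantale}.
Local Notation "a <= b" := (@qle Q a b).
Local Notation "a * b" := (@qmul Q a b).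
Local Notation ext := qs_ext.
Context {A B : QSubset Q} {rA : A -> A -> Q} {rB : B -> B -> Q}.
Hypothesis HA : APre A rA.
Hypothesis HB : APre B rB.

Lemma adj1 f g : Qgalois rA rB f g -> forall a b, rA a (g b) <= rB (f a) b.
Proof.
  intros [[Ef Mf] [[Eg Mg] [U C]]] a b.
  eapply le_trans; [apply Mf|].
  destruct HB as [_ [_ T]].
  eapply le_trans; [| apply T].
  apply e_mul_l. eapply le_trans; [apply (e_rdiv (ext (f (g b))))|].
  apply rdiv_mono. rewrite Ef, Eg. apply C.
Qed.

Lemma adj2 f g : Qgalois rA rB f g -> forall a b, rB (f a) b <= rA a (g b).
Proof.
  intros [[Ef Mf] [[Eg Mg] [U C]]] a b.
  eapply le_trans; [apply Mg|].
  destruct HA as [D [_ T]].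
  eapply le_trans; [| apply T].
  pose proof (DQ_Rd _ _ _ (D (g (f a)) (g b))) as HR. unfold Rd in HR.
  rewrite <- HR at 1. apply mul_monor.
  rewrite Eg, Ef. apply U.
Qed.

Lemma adj_eq f g : Qgalois rA rB f g -> forall a b, rA a (g b) = rB (f a) b.
Proof. intros H a b. apply le_anti; [apply adj1| apply adj2]; auto. Qed.

Lemma uniq_g f g g' : Sep A rA -> Qgalois rA rB f g -> Qgalois rA rB f g' ->
  forall b, g b = g' b.
Proof.
  intros S H1 H2 b.
  pose proof H1 as [[Ef _] [[Eg _] [_ C1]]].
  pose proof H2 as [_ [[Eg' _] [_ C2]]].
  apply S.
  - rewrite Eg, Eg'. reflexivity.
  - eapply le_trans; [| apply (adj2 _ _ H2)]. rewrite Eg. apply C1.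
  - eapply le_trans; [| apply (adj2 _ _ H1)]. rewrite Eg'. apply C2.
Qed.

Lemma uniq_f f f' g : Sep B rB -> Qgalois rA rB f g -> Qgalois rA rB f' g ->
  forall a, f a = f' a.
Proof.
  intros S H1 H2 a.
  pose proof H1 as [[Ef _] [_ [U1 _]]].
  pose proof H2 as [[Ef' _] [_ [U2 _]]].
  apply S.
  - rewrite Ef, Ef'. reflexivity.
  - eapply le_trans; [| apply (adj1 _ _ H1)]. rewrite Ef. apply U2.
  - eapply le_trans; [| apply (adj1 _ _ H2)]. rewrite Ef'. apply U1.
Qed.

Lemma uniq_rep {I : Type} (rep : I -> A)
  (Det : forall a a', ext a = ext a' -> (forall i, rA (rep i) a = rA (rep i) a') -> a = a')
  f g f' g' : Sep B rB -> Qgalois rA rB f g -> Qgalois rA rB f' g' ->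
  (forall i, f (rep i) = f' (rep i)) -> f = f' /\ g = g'.
Proof.
  intros S H1 H2 E.
  assert (Eg : g = g').
  { apply functional_extensionality. intro b.
    pose proof H1 as [_ [[Eg _] _]]. pose proof H2 as [_ [[Eg' _] _]].
    apply Det.
    - rewrite Eg, Eg'. reflexivity.
    - intro i. rewrite (adj_eq _ _ H1), (adj_eq _ _ H2), E. reflexivity. }
  subst g'. split; auto.
  apply functional_extensionality. apply (uniq_f _ _ _ S H1 H2).
Qed.

Lemma uniq_rep' {J : Type} (rep : J -> B)
  (Det : forall b b', ext b = ext b' -> (forall j, rB b (rep j) = rB b' (rep j)) -> b = b')
  f g f' g' : Sep A rA -> Qgalois rA rB f g -> Qgalois rA rB f' g' ->
  (forall j, g (rep j) = g' (rep j)) -> f = f' /\ g = g'.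
Proof.
  intros S H1 H2 E.
  assert (Ef : f = f').
  { apply functional_extensionality. intro a.
    pose proof H1 as [[Ef _] _]. pose proof H2 as [[Ef' _] _].
    apply Det.
    - rewrite Ef, Ef'. reflexivity.
    - intro j. rewrite <- (adj_eq _ _ H1), <- (adj_eq _ _ H2), E. reflexivity. }
  subst f'. split; auto.
  apply functional_extensionality. apply (uniq_g _ _ _ S H1 H2).
Qed.

End Gal.

Lemma sig_eq {T : Type} {P : T -> Prop} (a b : sig P) : proj1_sig a = proj1_sig b -> a = b.
Proof.
  destruct a as [a Ha], b as [b Hb]. simpl. intros ->. f_equal. apply proof_irrelevance.
Qed.

Section Cons.
Context {Q : Quantale}.
Local Notation "a <= b" := (@qle Q a b).
Local Notation "a * b" := (@qmul Q a b).
Local Notation ext := qs_ext.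

Lemma DQ_cast1 (p p' q u : Q) : p = p' -> DQ p q u -> DQ p' q u.
Proof. intros ->; auto. Qed.
Lemma DQ_cast2 (p q q' u : Q) : q = q' -> DQ p q u -> DQ p q' u.
Proof. intros ->; auto. Qed.

Lemma rdiv_mono_gen (a b p p' : Q) : a <= b -> p = p' -> qrdiv a p <= qrdiv b p'.
Proof. intros H <-. apply rdiv_mono. exact H. Qed.

Variables X Y : QPreord Q.
Local Notation rX := (@qp_rel Q X).
Local Notation rY := (@qp_rel Q Y).

Lemma dist_r (phi : X -> Y -> Q) : is_distributor phi -> rle (comp phi rX) phi.
Proof.
  intros [Hq H]. eapply rle_trans; [apply pre_l, rX_pre|]. exact H.
Qed.
Lemma dist_l (phi : X -> Y -> Q) : is_distributor phi -> rle (comp rY phi) phi.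
Proof.
  intros [Hq H]. eapply rle_trans; [| exact H].
  apply comp_monor. apply pre_r; [apply rX_pre| exact Hq].
Qed.
Lemma dist_I (phi : X -> Y -> Q) : is_Qrel phi -> rle (comp phi rX) phi ->
  rle (comp rY phi) phi -> is_distributor phi.
Proof.
  intros Hq H1 H2. split; auto.
  eapply rle_trans; [apply comp_monor, H1| exact H2].
Qed.

Definition AtoB_fun (d : Distributors X Y) (y : Y) : PX X.
Proof.
  refine (existT _ (ext y) (exist _ (fun x (_ : one (ext y)) => proj1_sig d x y) _)).
  destruct d as [phi [Hq H]]. simpl. split.
  - intros x t. exact (Hq x y).
  - intros x t. exact (dist_r phi (conj Hq H) x y).
Defined.

Definition AtoB (d : Distributors X Y) : MonoToP X Y.
Proof.
  exists (AtoB_fun d). split.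
  - intro y. reflexivity.
  - intros y y'. destruct d as [phi Hd].
    apply (sw_ub _ _ (fun (_ : one (ext y)) (_ : one (ext y')) => rY y y')).
    + intros [] []. exact (rX_Qrel Y y y').
    + intros x t. apply comp_le. intros []. destruct t.
      eapply le_trans; [apply (comp_ge rY phi x y y')| exact (dist_l phi Hd x y')].
Defined.

Definition BtoA (h : MonoToP X Y) : Distributors X Y.
Proof.
  exists (fun x y => pmu (proj1_sig h y) x tt).
  destruct h as [h [Eh Mh]]. simpl. apply dist_I.
  - intros x y. apply (DQ_cast2 _ _ _ _ (Eh y)). exact (PX_Qrel X (h y) x tt).
  - intros x y. exact (PX_cl X (h y) x tt).
  - intros x y'. apply comp_le. intro y.
    eapply le_trans; [| apply (sw_prop (Z:=one (projT1 (h y'))) _ _ (PX_Qrel X (h y)) x tt)].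
    eapply le_trans; [| apply (comp_ge (Y:=one (projT1 (h y))) (Z:=one (projT1 (h y'))) _ _ x tt tt)].
    apply mul_monol. apply rdiv_mono_gen; [apply (Mh y y')| exact (eq_sym (Eh y))].
Defined.

Lemma AB1 d : BtoA (AtoB d) = d.
Proof. apply sig_eq. destruct d as [phi Hd]. reflexivity. Qed.
Lemma AB2 h : AtoB (BtoA h) = h.
Proof.
  apply sig_eq. destruct h as [h [Eh Mh]]. simpl.
  apply functional_extensionality. intro y. apply PX_eq.
  - simpl. symmetry. exact (Eh y).
  - intro x. reflexivity.
Qed.

Definition AtoC_fun (d : Distributors X Y) (x : X) : PdX Y.
Proof.
  refine (existT _ (ext x) (exist _ (fun (_ : one (ext x)) y => proj1_sig d x y) _)).
  destruct d as [phi [Hq H]]. simpl. split.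
  - intros t y. exact (Hq x y).
  - intros t y. exact (dist_l phi (conj Hq H) x y).
Defined.

Definition AtoC (d : Distributors X Y) : MonoToPd X Y.
Proof.
  exists (AtoC_fun d). split.
  - intro x. reflexivity.
  - intros x x'. destruct d as [phi Hd].
    apply (se_ub _ _ (fun (_ : one (ext x)) (_ : one (ext x')) => rX x x')).
    + intros [] []. exact (rX_Qrel X x x').
    + intros t y. apply comp_le. intros []. destruct t.
      eapply le_trans; [apply (comp_ge phi rX x x' y)| exact (dist_r phi Hd x y)].
Defined.

Definition CtoA (h : MonoToPd X Y) : Distributors X Y.
Proof.
  exists (fun x y => plam (proj1_sig h x) tt y).
  destruct h as [h [Eh Mh]]. simpl. apply dist_I.
  - intros x y. apply (DQ_cast1 _ _ _ _ (Eh x)). exact (PdX_Qrel Y (h x) tt y).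
  - intros x y. apply comp_le. intro x'.
    eapply le_trans; [| apply (se_prop (plam (h x')) (plam (h x)) tt y)].
    eapply le_trans; [| apply (comp_ge (X:=one (projT1 (h x))) (Y:=one (projT1 (h x'))) _ _ tt tt y)].
    apply mul_mono; [apply rdiv_mono_gen; [apply le_refl| exact (eq_sym (Eh x'))]| apply (Mh x x')].
  - intros x y. exact (PdX_cl Y (h x) tt y).
Defined.

Lemma AC1 d : CtoA (AtoC d) = d.
Proof. apply sig_eq. destruct d as [phi Hd]. reflexivity. Qed.
Lemma AC2 h : AtoC (CtoA h) = h.
Proof.
  apply sig_eq. destruct h as [h [Eh Mh]]. simpl.
  apply functional_extensionality. intro x. apply PdX_eq.
  - simpl. symmetry. exact (Eh x).
  - intro y. reflexivity.
Qed.

End Cons.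

Section ConsD.
Context {Q : Quantale}.
Local Notation "a <= b" := (@qle Q a b).
Local Notation "a * b" := (@qmul Q a b).
Local Notation ext := qs_ext.
Variables X Y : QPreord Q.
Local Notation rX := (@qp_rel Q X).
Local Notation rY := (@qp_rel Q Y).

Definition fD (d : Distributors X Y) (m : PX X) : PdX Y.
Proof.
  refine (existT _ (projT1 m) (exist _ (swarrow (proj1_sig d) (pmu m)) _)).
  destruct d as [phi Hd]. simpl. split.
  - apply sw_Qrel.
  - apply sw_ub.
    + apply comp_Qrel; [apply rX_Qrel| apply sw_Qrel].
    + eapply rle_trans; [apply comp_assoc_ge; [apply sw_Qrel| apply PX_Qrel]|].
      eapply rle_trans; [apply comp_monor, sw_prop, PX_Qrel|].
      apply dist_l; auto.
Defined.

Definition gD (d : Distributors X Y) (l : PdX Y) : PX X.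
Proof.
  refine (existT _ (projT1 l) (exist _ (searrow (plam l) (proj1_sig d)) _)).
  destruct d as [phi Hd]. simpl. split.
  - apply se_Qrel.
  - apply se_ub.
    + apply comp_Qrel; [apply se_Qrel| apply rX_Qrel].
    + eapply rle_trans; [apply comp_assoc_le; [apply se_Qrel| apply rX_Qrel]|].
      eapply rle_trans; [apply comp_monol, se_prop|].
      apply dist_r; auto.
Defined.

Lemma D_galois (d : Distributors X Y) :
  Qgalois (@PX_rel Q X) (@PdX_rel Q Y) (fD d) (gD d).
Proof.
  destruct d as [phi Hd]. pose proof (proj1 Hd) as Hq.
  split; [|split; [|split]].
  - split; [intro; reflexivity|]. intros m m'. unfold PX_rel, PdX_rel. simpl.
    apply se_ub; [apply sw_Qrel|].
    apply sw_ub; [apply comp_Qrel; apply sw_Qrel|].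
    eapply rle_trans; [apply comp_assoc_ge; [apply sw_Qrel| apply PX_Qrel]|].
    eapply rle_trans; [apply comp_monor, sw_prop, PX_Qrel|].
    apply sw_prop, PX_Qrel.
  - split; [intro; reflexivity|]. intros l l'. unfold PX_rel, PdX_rel. simpl.
    apply sw_ub; [apply se_Qrel|].
    apply se_ub; [apply comp_Qrel; apply se_Qrel|].
    eapply rle_trans; [apply comp_assoc_le; apply se_Qrel|].
    eapply rle_trans; [apply comp_monol, se_prop|].
    apply se_prop.
  - intro m. unfold PX_rel. simpl.
    apply (sw_ub _ _ (fun (_ : one (projT1 m)) (_ : one (projT1 m)) => projT1 m) (cst_Qrel _)).
    eapply rle_trans; [apply comp_cst_l, PX_Qrel|].
    apply se_ub; [apply PX_Qrel| apply sw_prop, PX_Qrel].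
  - intro l. unfold PdX_rel. simpl.
    apply (se_ub _ _ (fun (_ : one (projT1 l)) (_ : one (projT1 l)) => projT1 l) (cst_Qrel _)).
    eapply rle_trans; [apply comp_cst_r, PdX_Qrel|].
    apply sw_ub; [apply PdX_Qrel| apply se_prop].
Qed.

Definition AtoD (d : Distributors X Y) : Polarities X Y :=
  exist _ (fD d, gD d) (D_galois d).

Lemma restrictD_ok (p : Polarities X Y) :
  Qmono rX (@PdX_rel Q Y) (fun x => fst (proj1_sig p) (yo X x)).
Proof.
  destruct p as [[f g] H]. simpl. destruct H as [[Ef Mf] _]. split.
  - intro x. exact (Ef (yo X x)).
  - intros x x'. eapply le_trans; [| apply Mf].
    rewrite yoneda. apply le_refl.
Qed.

Definition restrictD (p : Polarities X Y) : MonoToPd X Y :=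
  exist _ (fun x => fst (proj1_sig p) (yo X x)) (restrictD_ok p).

Definition DtoA (p : Polarities X Y) : Distributors X Y := CtoA X Y (restrictD p).

Lemma sw_yo (d : Distributors X Y) x t y :
  swarrow (proj1_sig d) (pmu (yo X x)) t y = proj1_sig d x y.
Proof.
  destruct d as [phi Hd]. simpl. pose proof (proj1 Hd) as Hq. apply le_anti.
  - eapply le_trans; [| apply (sw_prop _ _ (PX_Qrel X (yo X x)) x y)].
    eapply le_trans; [| apply (comp_ge _ _ x t y)].
    pose proof (Qrel_Rd (X:=one (ext x)) _ t y (sw_Qrel phi (pmu (yo X x)))) as HR.
    unfold Rd in HR. simpl in HR. simpl. rewrite <- HR at 1.
    apply mul_monor. exact (pre_refl _ _ (rX_pre X) x).
  - apply (sw_ub _ _ (fun (_ : one (ext x)) y => phi x y)).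
    + intros [] y'. exact (Hq x y').
    + intros x' y'. apply comp_le. intros []. 
      eapply le_trans; [| apply (dist_r X Y phi Hd x' y')].
      apply (comp_ge phi rX x' x y').
Qed.

Lemma AD1 d : DtoA (AtoD d) = d.
Proof.
  apply sig_eq. simpl. apply functional_extensionality; intro x.
  apply functional_extensionality; intro y. apply sw_yo.
Qed.

Lemma AD2 p : AtoD (DtoA p) = p.
Proof.
  destruct p as [[f g] H]. apply sig_eq. simpl.
  set (d := DtoA (exist _ (f, g) H)).
  destruct (uniq_rep (PX_APre X) (PdX_APre Y) (yo X) (PX_Det X) (fD d) (gD d) f g
              (PdX_Sep Y) (D_galois d) H) as [E1 E2].
  - intro x. apply PdX_eq.
    + simpl. symmetry. exact (proj1 (proj1 H) (yo X x)).
    + intro y. exact (sw_yo d x tt y).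
  - exact (f_equal2 pair E1 E2).
Qed.

End ConsD.

Section ConsEF.
Context {Q : Quantale}.
Local Notation "a <= b" := (@qle Q a b).
Local Notation "a * b" := (@qmul Q a b).
Local Notation ext := qs_ext.
Variables X Y : QPreord Q.
Local Notation rX := (@qp_rel Q X).
Local Notation rY := (@qp_rel Q Y).

Definition fE (d : Distributors X Y) (m : PX Y) : PX X.
Proof.
  refine (existT _ (projT1 m) (exist _ (comp (pmu m) (proj1_sig d)) _)).
  destruct d as [phi Hd]. simpl. split.
  - apply comp_Qrel; [apply PX_Qrel| exact (proj1 Hd)].
  - eapply rle_trans; [apply comp_assoc_ge; [exact (proj1 Hd)| apply rX_Qrel]|].
    apply comp_monor. apply dist_r; auto.
Defined.

Definition gE (d : Distributors X Y) (m : PX X) : PX Y.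
Proof.
  refine (existT _ (projT1 m) (exist _ (swarrow (pmu m) (proj1_sig d)) _)).
  destruct d as [phi Hd]. simpl. split.
  - apply sw_Qrel.
  - apply sw_ub.
    + apply comp_Qrel; [apply sw_Qrel| apply rX_Qrel].
    + eapply rle_trans; [apply comp_assoc_ge; [apply rX_Qrel| exact (proj1 Hd)]|].
      eapply rle_trans; [apply comp_monor, dist_l; auto|].
      apply sw_prop. exact (proj1 Hd).
Defined.

Lemma E_galois (d : Distributors X Y) :
  Qgalois (@PX_rel Q Y) (@PX_rel Q X) (fE d) (gE d).
Proof.
  destruct d as [phi Hd]. pose proof (proj1 Hd) as Hq.
  split; [|split; [|split]].
  - split; [intro; reflexivity|]. intros m m'. unfold PX_rel. simpl.
    apply sw_ub; [apply sw_Qrel|].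
    eapply rle_trans; [apply comp_assoc_le; [apply PX_Qrel| exact Hq]|].
    apply comp_monol, sw_prop, PX_Qrel.
  - split; [intro; reflexivity|]. intros m m'. unfold PX_rel. simpl.
    apply sw_ub; [apply sw_Qrel|].
    apply sw_ub; [apply comp_Qrel; apply sw_Qrel|].
    eapply rle_trans; [apply comp_assoc_ge; [apply sw_Qrel| exact Hq]|].
    eapply rle_trans; [apply comp_monor, sw_prop; exact Hq|].
    apply sw_prop, PX_Qrel.
  - intro m. unfold PX_rel. simpl.
    apply (sw_ub _ _ (fun (_ : one (projT1 m)) (_ : one (projT1 m)) => projT1 m) (cst_Qrel _)).
    eapply rle_trans; [apply comp_cst_l, PX_Qrel|].
    apply sw_ub; [apply PX_Qrel| apply rle_refl].
  - intro m. unfold PX_rel. simpl.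
    apply (sw_ub _ _ (fun (_ : one (projT1 m)) (_ : one (projT1 m)) => projT1 m) (cst_Qrel _)).
    eapply rle_trans; [apply comp_cst_l; apply comp_Qrel; [apply sw_Qrel| exact Hq]|].
    apply sw_prop. exact Hq.
Qed.

Definition AtoE (d : Distributors X Y) : Axialities Y X :=
  exist _ (fE d, gE d) (E_galois d).

Lemma restrictE_ok (p : Axialities Y X) :
  Qmono rY (@PX_rel Q X) (fun y => fst (proj1_sig p) (yo Y y)).
Proof.
  destruct p as [[f g] H]. simpl. destruct H as [[Ef Mf] _]. split.
  - intro y. exact (Ef (yo Y y)).
  - intros y y'. eapply le_trans; [| apply Mf].
    rewrite yoneda. apply le_refl.
Qed.

Definition restrictE (p : Axialities Y X) : MonoToP X Y :=
  exist _ (fun y => fst (proj1_sig p) (yo Y y)) (restrictE_ok p).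

Definition EtoA (p : Axialities Y X) : Distributors X Y := BtoA X Y (restrictE p).

Lemma comp_yo (d : Distributors X Y) x y t :
  comp (pmu (yo Y y)) (proj1_sig d) x t = proj1_sig d x y.
Proof.
  destruct d as [phi Hd]. simpl. apply le_anti.
  - exact (dist_l X Y phi Hd x y).
  - exact (pre_l _ _ _ phi (rX_pre Y) x y).
Qed.

Lemma AE1 d : EtoA (AtoE d) = d.
Proof.
  apply sig_eq. simpl. apply functional_extensionality; intro x.
  apply functional_extensionality; intro y. apply comp_yo.
Qed.

Lemma AE2 p : AtoE (EtoA p) = p.
Proof.
  destruct p as [[f g] H]. apply sig_eq. simpl.
  set (d := EtoA (exist _ (f, g) H)).
  destruct (uniq_rep (PX_APre Y) (PX_APre X) (yo Y) (PX_Det Y) (fE d) (gE d) f g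
              (PX_Sep X) (E_galois d) H) as [E1 E2].
  - intro y. apply PX_eq.
    + simpl. symmetry. exact (proj1 (proj1 H) (yo Y y)).
    + intro x. exact (comp_yo d x y tt).
  - exact (f_equal2 pair E1 E2).
Qed.

Definition fF (d : Distributors X Y) (l : PdX Y) : PdX X.
Proof.
  refine (existT _ (projT1 l) (exist _ (searrow (proj1_sig d) (plam l)) _)).
  destruct d as [phi Hd]. simpl. split.
  - apply se_Qrel.
  - apply se_ub.
    + apply comp_Qrel; [apply rX_Qrel| apply se_Qrel].
    + eapply rle_trans; [apply comp_assoc_le; [apply rX_Qrel| apply se_Qrel]|].
      eapply rle_trans; [apply comp_monol, dist_r; auto|].
      apply se_prop.
Defined.

Definition gF (d : Distributors X Y) (l : PdX X) : PdX Y.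
Proof.
  refine (existT _ (projT1 l) (exist _ (comp (proj1_sig d) (plam l)) _)).
  destruct d as [phi Hd]. simpl. split.
  - apply comp_Qrel; [exact (proj1 Hd)| apply PdX_Qrel].
  - eapply rle_trans; [apply comp_assoc_le; [exact (proj1 Hd)| apply PdX_Qrel]|].
    apply comp_monol. apply dist_l; auto.
Defined.

Lemma F_galois (d : Distributors X Y) :
  Qgalois (@PdX_rel Q Y) (@PdX_rel Q X) (fF d) (gF d).
Proof.
  destruct d as [phi Hd]. pose proof (proj1 Hd) as Hq.
  split; [|split; [|split]].
  - split; [intro; reflexivity|]. intros l l'. unfold PdX_rel. simpl.
    apply se_ub; [apply se_Qrel|].
    apply se_ub; [apply comp_Qrel; apply se_Qrel|].
    eapply rle_trans; [apply comp_assoc_le; apply se_Qrel|].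
    eapply rle_trans; [apply comp_monol, se_prop|].
    apply se_prop.
  - split; [intro; reflexivity|]. intros l l'. unfold PdX_rel. simpl.
    apply se_ub; [apply se_Qrel|].
    eapply rle_trans; [apply comp_assoc_ge; [apply PdX_Qrel| apply se_Qrel]|].
    apply comp_monor, se_prop.
  - intro l. unfold PdX_rel. simpl.
    apply (se_ub _ _ (fun (_ : one (projT1 l)) (_ : one (projT1 l)) => projT1 l) (cst_Qrel _)).
    eapply rle_trans; [apply comp_cst_r; apply comp_Qrel; [exact Hq| apply se_Qrel]|].
    apply se_prop.
  - intro l. unfold PdX_rel. simpl.
    apply (se_ub _ _ (fun (_ : one (projT1 l)) (_ : one (projT1 l)) => projT1 l) (cst_Qrel _)).
    eapply rle_trans; [apply comp_cst_r, PdX_Qrel|].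
    apply se_ub; [apply PdX_Qrel| apply rle_refl].
Qed.

Definition AtoF (d : Distributors X Y) : DualAxialities Y X :=
  exist _ (fF d, gF d) (F_galois d).

Lemma restrictF_ok (p : DualAxialities Y X) :
  Qmono rX (@PdX_rel Q Y) (fun x => snd (proj1_sig p) (coyo X x)).
Proof.
  destruct p as [[f g] H]. simpl. destruct H as [_ [[Eg Mg] _]]. split.
  - intro x. exact (Eg (coyo X x)).
  - intros x x'. eapply le_trans; [| apply Mg].
    rewrite coyoneda. apply le_refl.
Qed.

Definition restrictF (p : DualAxialities Y X) : MonoToPd X Y :=
  exist _ (fun x => snd (proj1_sig p) (coyo X x)) (restrictF_ok p).

Definition FtoA (p : DualAxialities Y X) : Distributors X Y := CtoA X Y (restrictF p).

Lemma comp_coyo (d : Distributors X Y) x y t :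
  comp (proj1_sig d) (plam (coyo X x)) t y = proj1_sig d x y.
Proof.
  destruct d as [phi Hd]. simpl. apply le_anti.
  - exact (dist_r X Y phi Hd x y).
  - exact (pre_r _ _ _ phi (rX_pre X) (proj1 Hd) x y).
Qed.

Lemma AF1 d : FtoA (AtoF d) = d.
Proof.
  apply sig_eq. simpl. apply functional_extensionality; intro x.
  apply functional_extensionality; intro y. apply comp_coyo.
Qed.

Lemma AF2 p : AtoF (FtoA p) = p.
Proof.
  destruct p as [[f g] H]. apply sig_eq. simpl.
  set (d := FtoA (exist _ (f, g) H)).
  destruct (uniq_rep' (PdX_APre Y) (PdX_APre X) (coyo X) (PdX_Det X) (fF d) (gF d) f g
              (PdX_Sep Y) (F_galois d) H) as [E1 E2].
  - intro x. apply PdX_eq.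
    + simpl. symmetry. exact (proj1 (proj1 (proj2 H)) (coyo X x)).
    + intro y. exact (comp_coyo d x y tt).
  - exact (f_equal2 pair E1 E2).
Qed.

End ConsEF.

Lemma InBij_sym (A B : Type) : InBij A B -> InBij B A.
Proof. intros [f [g [H1 H2]]]. exists g, f. auto. Qed.
Lemma InBij_trans (A B C : Type) : InBij A B -> InBij B C -> InBij A C.
Proof.
  intros [f [g [H1 H2]]] [f' [g' [H1' H2']]].
  exists (fun a => f' (f a)), (fun c => g (g' c)). split.
  - intro a. rewrite H1'. apply H1.
  - intro c. rewrite H2. apply H2'.
Qed.

Theorem theorem4p24 (Q : Quantale) (Hnontriv : qlt (qbot Q) (qe Q))
  (X Y : QPreord Q) :
  let A := Distributors X Y in
  let B := MonoToP X Y in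
  let C := MonoToPd X Y in
  let D := Polarities X Y in
  let E := Axialities Y X in
  let F := DualAxialities Y X in
  InBij A B /\ InBij A C /\ InBij A D /\ InBij A E /\ InBij A F /\
  InBij B C /\ InBij B D /\ InBij B E /\ InBij B F /\
  InBij C D /\ InBij C E /\ InBij C F /\
  InBij D E /\ InBij D F /\
  InBij E F.
Proof.
  intros A B C D E F.
  assert (AB : InBij A B) by (exists (AtoB X Y), (BtoA X Y); split; [apply AB1| apply AB2]).
  assert (AC : InBij A C) by (exists (AtoC X Y), (CtoA X Y); split; [apply AC1| apply AC2]).
  assert (AD : InBij A D) by (exists (AtoD X Y), (DtoA X Y); split; [apply AD1| apply AD2]).
  assert (AE : InBij A E) by (exists (AtoE X Y), (EtoA X Y); split; [apply AE1| apply AE2]).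
  assert (AF : InBij A F) by (exists (AtoF X Y), (FtoA X Y); split; [apply AF1| apply AF2]).
  assert (T : forall U V, InBij A U -> InBij A V -> InBij U V).
  { intros U V H1 H2. exact (InBij_trans _ _ _ (InBij_sym _ _ H1) H2). }
  repeat split; auto.
Qed.
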